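(* Let $d\geq 1$, $p\in[1,\infty)\setminus\{2\}$, and let $\bm{Q}_1,\bm{Q}_2$ be $d\times d$ symmetric positive definite matrices. For $\beta>0$ let $\bm{Q}(\beta)=\left(1+\frac{1}{\beta}\right)^{1/p}\bm{Q}_1+(1+\beta)^{1/p}\bm{Q}_2$. Then the function $\beta\mapsto\mathrm{trace}(\bm{Q}(\beta))$ on $(0,\infty)$ is minimized at $$\beta^*_{\mathrm{tr}}=\left(\frac{\mathrm{trace}(\bm{Q}_1)}{\mathrm{trace}(\bm{Q}_2)}\right)^{\frac{p}{1+p}}.$$ *)

(* Defs.v *)
From HB Require Import structures.
From mathcomp Require Import all_boot all_order all_algebra.
From mathcomp Require Import all_classical all_reals all_analysis.
Set Implicit Arguments. Unset Strict Implicit. Unset Printing Implicit Defensive.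
Import Order.TTheory GRing.Theory Num.Theory.
Local Open Scope ring_scope.

Definition symmetric_mx (R : realType) (d : nat) (A : 'M[R]_d) : Prop :=
  A^T = A.

Definition spd_mx (R : realType) (d : nat) (A : 'M[R]_d) : Prop :=
  symmetric_mx A /\
  forall x : 'cV[R]_d, x != 0 -> 0 < ((x^T *m A *m x) 0 0).

Definition Qbeta (R : realType) (d : nat) (p : R) (Q1 Q2 : 'M[R]_d) (beta : R)
  : 'M[R]_d :=
  ((1 + beta^-1) `^ (p^-1)) *: Q1 + ((1 + beta) `^ (p^-1)) *: Q2.

(* Main.v *)
Require Import Defs.
From HB Require Import structures.
From mathcomp Require Import all_boot all_order all_algebra.
From mathcomp Require Import all_classical all_reals all_analysis.
From mathcomp Require Import ring lra.
Import Order.TTheory GRing.Theory Num.Theory.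
Local Open Scope ring_scope.
Lemma spd_tr_gt0 (R : realType) (d : nat) (Q : 'M[R]_d) :
  (1 <= d)%N -> spd_mx Q -> 0 < \tr Q.
Proof.
move=> hd [_ hQ].
have diag i : 0 < Q i i.
  have nz : delta_mx i 0 != 0 :> 'cV[R]_d.
    apply/eqP => /matrixP /(_ i 0); rewrite !mxE !eqxx /= => /eqP.
    by rewrite oner_eq0.
  have := hQ _ nz.
  by rewrite trmx_delta -rowE -colE !mxE.
rewrite /mxtrace (bigD1 (Ordinal hd)) //=.
apply: (lt_le_trans (diag (Ordinal hd))); rewrite lerDl.
by apply: sumr_ge0 => j _; exact: ltW.
Qed.

Lemma tr_Qbeta (R : realType) (d : nat) (p : R) (Q1 Q2 : 'M[R]_d) beta :
  \tr (Qbeta p Q1 Q2 beta) =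
  (1 + beta^-1) `^ (p^-1) * \tr Q1 + (1 + beta) `^ (p^-1) * \tr Q2.
Proof. by rewrite /Qbeta mxtraceD !mxtraceZ. Qed.
Lemma key_ineq (R : realType) (x y q beta : R) :
  0 < x -> 0 < y -> 0 < q -> 0 < beta ->
  (x + y) `^ (1 + q) <=
  (1 + beta^-1) `^ q * x `^ (1 + q) + (1 + beta) `^ q * y `^ (1 + q).
Proof.
move=> x0 y0 q0 b0.
set r := 1 + q.
have r0 : 0 < r by rewrite /r addr_gt0.
set c := 1 + beta^-1. set e := 1 + beta.
have c0 : 0 < c by rewrite /c addr_gt0 ?invr_gt0.
have e0 : 0 < e by rewrite /e addr_gt0.
set s := q / r.
have s0 : 0 < s by rewrite /s divr_gt0.
have H := @hoelder2 R (x * c `^ s) (y * e `^ s) ((c^-1) `^ s) ((e^-1) `^ s)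
  r (r / q).
have rq0 : 0 < r / q by rewrite divr_gt0.
have := H (mulr_ge0 (ltW x0) (powR_ge0 _ _)) (mulr_ge0 (ltW y0) (powR_ge0 _ _))
  (powR_ge0 _ _) (powR_ge0 _ _) r0 rq0.
have pq : r^-1 + (r / q)^-1 = 1.
  rewrite invf_div /r; field; rewrite -/r gt_eqF //.
move=> /(_ pq).
have E1 : forall (z u : R), 0 < z -> 0 < u -> z * u `^ s * (u^-1) `^ s = z.
  move=> z u z0 u0; rewrite -mulrA -powRM ?invr_ge0 ?ltW // mulfV ?gt_eqF //.
  by rewrite powR1 mulr1.
rewrite !E1 //.
have E2 : forall (z u : R), 0 < z -> 0 < u -> (z * u `^ s) `^ r = u `^ q * z `^ r.
  move=> z u z0 u0; rewrite powRM ?powR_ge0 ?ltW // -powRrM /s mulfVK ?gt_eqF //.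
  by rewrite mulrC.
have E3 : forall (u : R), 0 < u -> ((u^-1) `^ s) `^ (r / q) = u^-1.
  have sr : s * (r / q) = 1 by rewrite /s; field; rewrite !gt_eqF.
  move=> u u0; rewrite -powRrM sr.
  by rewrite powRr1 // invr_ge0 ltW.
rewrite !E2 // !E3 //.
have -> : c^-1 + e^-1 = 1.
  rewrite /c /e; field.
  rewrite (gt_eqF b0) andbT gt_eqF //; lra.
rewrite powR1 mulr1 => Hle.
set F := (c `^ q * _ + _) in Hle *.
have F0 : 0 <= F by rewrite /F addr_ge0 // ?mulr_ge0 // ?powR_ge0.
apply: (le_trans (ge0_ler_powR (ltW r0) _ _ Hle)); rewrite ?nnegrE ?powR_ge0 ?addr_ge0 //; try exact: ltW.
by rewrite -powRrM mulVf ?gt_eqF // powRr1.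
Qed.

Lemma val_at_opt (R : realType) (x y q : R) :
  0 < x -> 0 < y -> 0 < q ->
  (1 + (x / y)^-1) `^ q * x `^ (1 + q) + (1 + x / y) `^ q * y `^ (1 + q)
  = (x + y) `^ (1 + q).
Proof.
move=> x0 y0 q0.
have D : forall z, 0 < z -> z `^ (1 + q) = z * z `^ q.
  move=> z z0; rewrite powRD ?powRr1 ?ltW //.
  by apply/implyP => _; rewrite gt_eqF.
have xy0 : 0 < x + y by rewrite addr_gt0.
rewrite !D //.
have -> : 1 + (x / y)^-1 = (x + y) / x by rewrite invf_div; field; rewrite !gt_eqF.
have -> : 1 + x / y = (x + y) / y by field; rewrite gt_eqF.
rewrite !mulrA ![_ * x]mulrC ![_ * y]mulrC.
rewrite -!mulrA -!powRM ?divr_ge0 ?ltW //.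
by rewrite !mulfVK ?gt_eqF // -mulrDl.
Qed.

Theorem mainTheorem3 (R : realType) (d : nat) (p : R) (Q1 Q2 : 'M[R]_d)
  (hd : (1 <= d)%N) (hp1 : 1 <= p) (hp2 : p != 2)
  (hQ1 : spd_mx Q1) (hQ2 : spd_mx Q2) :
  let beta_star := (\tr Q1 / \tr Q2) `^ (p / (1 + p)) in
  0 < beta_star /\
  forall beta : R, 0 < beta ->
    \tr (Qbeta p Q1 Q2 beta_star) <= \tr (Qbeta p Q1 Q2 beta).
Proof.
move=> beta_star.
have a0 := @spd_tr_gt0 _ _ _ hd hQ1.
have b0 := @spd_tr_gt0 _ _ _ hd hQ2.
have p0 : 0 < p by apply: lt_le_trans hp1.
set a := \tr Q1 in a0 beta_star *.
set b := \tr Q2 in b0 beta_star *.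
set q := p^-1.
have q0 : 0 < q by rewrite invr_gt0.
set r := 1 + q.
have r0 : 0 < r by rewrite /r addr_gt0.
set x := a `^ r^-1. set y := b `^ r^-1.
have x0 : 0 < x by rewrite powR_gt0.
have y0 : 0 < y by rewrite powR_gt0.
have ax : a = x `^ r by rewrite /x -powRrM mulVf ?gt_eqF // powRr1 // ltW.
have bx : b = y `^ r by rewrite /y -powRrM mulVf ?gt_eqF // powRr1 // ltW.
have bs : beta_star = x / y.
  rewrite /beta_star.
  have -> : p / (1 + p) = r^-1.
    rewrite /r /q; field; rewrite !gt_eqF //; lra.
  rewrite powRM ?invr_ge0 ?ltW // -/x.
  by rewrite -powR_inv1 ?ltW // powRAC powR_inv1 // powR_ge0.
have bs0 : 0 < beta_star by rewrite bs divr_gt0.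
split => // beta beta0.
rewrite !tr_Qbeta -/a -/b -/q bs ax bx -/r.
have := @val_at_opt R x y q x0 y0 q0; rewrite -/r => ->.
exact: (@key_ineq R x y q beta x0 y0 q0 beta0).
Qed.
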